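(* Let $R$ be a commutative ring in which every prime ideal is maximal. Let $X$ be the set of maximal ideals $P$ of $R$ such that $PR_P=0$, and let $A$ be the kernel of the natural map $R\to\prod_{P\in X}R_P$. If $R$ is P-coherent, then $A$ is a pure ideal of $R$ (a pure submodule of $R$) and $X=V(A)$.
   Context: $R$ is P-coherent if every principal ideal is finitely presented. An ideal $A$ is pure if $A\to R$ remains injective after tensoring with every module. $V(A)$ is the set of prime ideals containing $A$. *)

(* Defs.v *)
From mathcomp Require Import all_boot all_order all_algebra.
Set Implicit Arguments. Unset Strict Implicit. Unset Printing Implicit Defensive.
Import GRing.Theory.
Local Open Scope ring_scope.

Section CommAlg.
Variable R : comPzRingType.

Definition is_ideal (I : R -> Prop) : Prop :=
  [/\ I 0, (forall x y, I x -> I y -> I (x + y)) & (forall r x, I x -> I (r * x))].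

Definition prime_ideal (P : R -> Prop) : Prop :=
  [/\ is_ideal P, ~ P 1 & (forall a b, P (a * b) -> P a \/ P b)].

Definition maximal_ideal (P : R -> Prop) : Prop :=
  [/\ is_ideal P, ~ P 1 &
     (forall I : R -> Prop, is_ideal I -> (forall x, P x -> I x) -> ~ I 1 ->
        forall x, I x -> P x)].

Definition principal (a : R) : R -> Prop := fun x => exists r, x = r * a.

(* An ideal I, viewed as an R-module, is finitely presented: there is a finite
   generating family g of I whose module of relations
   {c in R^n | sum c_i g_i = 0} is finitely generated. *)
Definition fin_presented_ideal (I : R -> Prop) : Prop :=
  exists n (g : 'I_n -> R),
    [/\ (forall i, I (g i)),
        (forall x, I x -> exists c : 'I_n -> R, x = \sum_i c i * g i) &
        exists k (r : 'I_k -> 'I_n -> R),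
          (forall j, \sum_i r j i * g i = 0) /\
          (forall c : 'I_n -> R, \sum_i c i * g i = 0 ->
             exists d : 'I_k -> R, forall i, c i = \sum_j d j * r j i)].

Definition P_coherent : Prop := forall a : R, fin_presented_ideal (principal a).

Definition balanced (M : lmodType R) (A : R -> Prop) (N : zmodType)
    (b : M -> R -> N) : Prop :=
  [/\ (forall m m' a, A a -> b (m + m') a = b m a + b m' a),
      (forall m a a', A a -> A a' -> b m (a + a') = b m a + b m a') &
      (forall r m a, A a -> b (r *: m) a = b m (r * a))].

(* The element sum_i m_i (x) a_i of M (x)_R A is zero: by the universal property
   of the tensor product, it is killed by every balanced map. *)
Definition tensor_zero (M : lmodType R) (A : R -> Prop) (n : nat)
    (m : 'I_n -> M) (a : 'I_n -> R) : Prop :=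
  forall (N : zmodType) (b : M -> R -> N), @balanced M A N b ->
    \sum_i b (m i) (a i) = 0.

(* A is pure: for every module M, the map M (x) A -> M (x) R = M,
   m (x) a |-> a m, is injective. *)
Definition pure_ideal (A : R -> Prop) : Prop :=
  is_ideal A /\
  forall (M : lmodType R) (n : nat) (m : 'I_n -> M) (a : 'I_n -> R),
    (forall i, A (a i)) -> \sum_i a i *: m i = 0 -> @tensor_zero M A n m a.

(* x maps to 0 in the localization R_P: some s outside P kills x. *)
Definition zero_in_loc (P : R -> Prop) (x : R) : Prop :=
  exists s, ~ P s /\ s * x = 0.

Definition Xset (P : R -> Prop) : Prop :=
  maximal_ideal P /\ forall p, P p -> zero_in_loc P p.

Definition kerX : R -> Prop :=
  fun x => forall P, Xset P -> zero_in_loc P x.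

Definition Vset (A : R -> Prop) (P : R -> Prop) : Prop :=
  prime_ideal P /\ forall x, A x -> P x.

End CommAlg.

(* Main.v *)
Require Import Defs.
From mathcomp Require Import all_boot all_order all_algebra.
From mathcomp Require Import ring.
From mathcomp Require Import boolp classical_sets.
From Stdlib Require Import Classical.
Import GRing.Theory.

Section Helpers.
Local Open Scope ring_scope.
Variable R : comPzRingType.
Implicit Types (I P Q : R -> Prop).

Lemma id0 I : is_ideal I -> I 0. Proof. by case. Qed.
Lemma idD I x y : is_ideal I -> I x -> I y -> I (x + y). Proof. by case=> _ H _; apply: H. Qed.
Lemma idM I r x : is_ideal I -> I x -> I (r * x). Proof. by case=> _ _ H; apply: H. Qed.
Lemma idMr I r x : is_ideal I -> I x -> I (x * r). Proof. by move=> hI hx; rewrite mulrC; apply: idM. Qed.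

Arguments id0 {I}.
Arguments idD {I x y}.
Arguments idM {I} r {x}.
Arguments idMr {I} r {x}.

Lemma id_sum I n (f : 'I_n -> R) : is_ideal I -> (forall i, I (f i)) -> I (\sum_i f i).
Proof.
move=> hI hf; apply: (big_ind (fun x => I x)) => //; first exact: id0.
by move=> x y; apply: idD.
Qed.

Lemma maximal_prime P : maximal_ideal P -> prime_ideal P.
Proof.
case=> hP h1 hmax; split => // a b hab.
case: (classic (P a)) => ha; first by left.
right.
pose J := fun x => exists p r, P p /\ x = p + r * a.
have hJ : is_ideal J.
  split.
  - by exists 0, 0; split; [exact: id0 | ring].
  - move=> x y [p [r [hp ->]]] [q [s [hq ->]]].
    by exists (p + q), (r + s); split; [exact: idD | ring].
  - move=> r x [p [s [hp ->]]].
    by exists (r * p), (r * s); split; [exact: idM | ring].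
case: (classic (J 1)) => hJ1.
  case: hJ1 => p [r [hp e]].
  have -> : b = b * p + r * (a * b) by rewrite -[b]mulr1 {1}e; ring.
  by apply: idD => //; [apply: idM | apply: idM].
exfalso; apply: ha; apply: (hmax J) => //.
  by move=> x hx; exists x, 0; split => //; ring.
by exists 0, 1; split; [exact: id0 | ring].
Qed.

Arguments maximal_prime {P}.

Lemma prime_notX P x n : prime_ideal P -> ~ P x -> ~ P (x ^+ n).
Proof.
case=> hP h1 hpr hx; elim: n => [|n IH]; first by rewrite expr0.
by rewrite exprS => /hpr [].
Qed.

Lemma prime_notprod P n (f : 'I_n -> R) : prime_ideal P -> (forall i, ~ P (f i)) ->
  ~ P (\prod_i f i).
Proof.
case=> hP h1 hpr hf.
apply: (big_ind (fun x => ~ P x)) => // x y hx hy /hpr [] //.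
Qed.


Definition good I (S : R -> Prop) (B : R -> Prop) :=
  [/\ is_ideal B, (forall x, I x -> B x) & (forall x, B x -> ~ S x)].

Lemma prime_avoid I (S : R -> Prop) : is_ideal I -> S 1 ->
  (forall x y, S x -> S y -> S (x * y)) -> (forall x, I x -> ~ S x) ->
  exists Q, prime_ideal Q /\ (forall x, I x -> Q x) /\ (forall x, Q x -> ~ S x).
Proof.
move=> hI hS1 hSM hIS.
pose PP : set (set R) := fun B => good I S B \/ (forall x, ~ B x).
have [A [hA hAmax]] : exists A : set R, PP A /\ (forall B : set R, (A `<` B)%classic -> ~ PP B).
  apply: Zorn_bigcup => F hF htot.
  case: (classic (exists X, F X /\ good I S X)) => [[X0 [FX0 gX0]]|hno]; last first.
    right => x [X FX Xx]; case: (hF X FX) => [gX|eX]; last exact: (eX x).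
    by apply: hno; exists X.
  have memgood : forall X x, F X -> X x -> good I S X.
    by move=> X x FX Xx; case: (hF X FX) => // eX; case: (eX x).
  left; split.
  - split.
    + by exists X0 => //; case: gX0 => h _ _; exact: id0.
    + move=> x y [X FX Xx] [Y FY Yy].
      case: (htot X Y FX FY) => sub.
      * exists Y => //; case: (memgood Y y FY Yy) => h _ _; apply: idD => //; exact: sub.
      * exists X => //; case: (memgood X x FX Xx) => h _ _; apply: idD => //; exact: sub.
    + move=> r x [X FX Xx]; exists X => //.
      by case: (memgood X x FX Xx) => h _ _; apply: idM.
  - by move=> x Ix; exists X0 => //; case: gX0 => _ h _; apply: h.
  - by move=> x [X FX Xx]; case: (memgood X x FX Xx) => _ _ h; apply: h.
have gA : good I S A.
  case: hA => // eA; exfalso; apply: (hAmax I).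
    split; first by move=> x /eA.
    by move=> h; apply: (eA 0); apply: h; exact: id0.
  by left; split.
case: gA => hAi hIA hAS.
exists A; split => //; split => //.
  by move=> h; apply: (hAS 1).
move=> a b hab; apply: NNPP => hn.
have ha : ~ A a by move=> h; apply: hn; left.
have hb : ~ A b by move=> h; apply: hn; right.
have ext : forall c, ~ A c -> exists y r, A y /\ S (y + r * c).
  move=> c hc.
  pose B := fun x => exists y r, A y /\ x = y + r * c.
  have hBi : is_ideal B.
    split.
    - by exists 0, 0; split; [exact: id0 | ring].
    - move=> x z [p [r [hp ->]]] [q [s [hq ->]]].
      by exists (p + q), (r + s); split; [exact: idD | ring].
    - move=> r x [p [s [hp ->]]].
      by exists (r * p), (r * s); split; [exact: idM | ring].
  have AB : forall x, A x -> B x by move=> x hx; exists x, 0; split => //; ring.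
  have nPB : ~ PP B.
    apply: hAmax; split; first exact: AB.
    move=> h; apply: hc; apply: h; exists 0, 1; split; [exact: id0 | ring].
  apply: NNPP => hne; apply: nPB; left; split => //.
    by move=> x /hIA /AB.
  move=> x [y [r [hy ->]]] hs; apply: hne; by exists y, r.
case: (ext a ha) => y1 [r1 [hy1 hs1]].
case: (ext b hb) => y2 [r2 [hy2 hs2]].
apply: (hAS _ _ (hSM _ _ hs1 hs2)).
have -> : (y1 + r1 * a) * (y2 + r2 * b) =
  y1 * (y2 + r2 * b) + r1 * (y2 * a) + (r1 * r2) * (a * b) by ring.
apply: idD => //; last exact: idM.
apply: idD => //; first exact: idMr.
by apply: idM => //; apply: idMr.
Qed.


Lemma local_nil (hdim : forall P : R -> Prop, prime_ideal P -> maximal_ideal P) P p :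
  prime_ideal P -> P p -> exists n s, ~ P s /\ s * p ^+ n = 0.
Proof.
move=> hP hp; apply: NNPP => hne.
pose S := fun x => exists s n, ~ P s /\ x = s * p ^+ n.
have hI : is_ideal (fun x : R => x = 0).
  split => //; [by move=> x y -> ->; rewrite addr0 | by move=> r x ->; rewrite mulr0].
have [|||Q [hQ [_ hQS]]] := @prime_avoid (fun x => x = 0) S hI.
- by exists 1, 0; split; [case: hP | rewrite expr0 mulr1].
- move=> x y [s [n [hs ->]]] [t [m [ht ->]]]; exists (s * t), (n + m); split.
    by case: hP => _ _ hpr /hpr [].
  by rewrite exprD; ring.
- move=> x -> [s [n [hs e]]]; apply: hne; by exists n, s.
have [hQi hQ1 hQmax] := hdim Q hQ.
have QP : forall x, Q x -> P x.
  move=> x hx; apply: NNPP => hnx; apply: (hQS x hx); exists x, 0%N; split => //.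
  by rewrite expr0 mulr1.
have : Q p.
  apply: (hQmax P) => //; first by case: hP.
  by case: hP.
move=> /hQS; apply; exists 1, 1%N; split; first by case: hP.
by rewrite expr1 mul1r.
Qed.
Arguments local_nil hdim {P p}.


Lemma ann_fg : @P_coherent R -> forall a : R, exists u k (v : 'I_k -> R),
  [/\ u * a = 0, (forall j, v j * a = 0) &
      (forall x, x * a = 0 -> exists d : 'I_k -> R, x = x * u + \sum_j d j * v j)].
Proof.
move=> hcoh a.
case: (hcoh a) => n [g [hg hgen [k [r [hr hrel]]]]].
pose t i := projT1 (cid (hg i)).
have ht : forall i, g i = t i * a := fun i => projT2 (cid (hg i)).
have [c hc] := hgen a (ex_intro _ 1 (esym (mul1r a))).
exists (1 - \sum_i c i * t i), k, (fun j => \sum_i r j i * t i); split.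
- rewrite mulrBl mul1r mulr_suml.
  under eq_bigr do rewrite -mulrA -ht.
  by rewrite -hc subrr.
- move=> j; rewrite mulr_suml.
  under eq_bigr do rewrite -mulrA -ht.
  exact: hr.
- move=> x hx.
  have [d hd] : exists d : 'I_k -> R, forall i, x * c i = \sum_j d j * r j i.
    apply: hrel.
    under eq_bigr do rewrite -mulrA.
    by rewrite -mulr_sumr -hc.
  exists d.
  have e : \sum_j d j * (\sum_i r j i * t i) = x * \sum_i c i * t i.
    rewrite mulr_sumr.
    under eq_bigr do rewrite mulr_sumr.
    rewrite exchange_big /=; apply: eq_bigr => i _.
    rewrite mulrA (hd i) mulr_suml; apply: eq_bigr => j _.
    by rewrite mulrA.
  rewrite e; ring.
Qed.


Lemma V_X (hdim : forall P : R -> Prop, prime_ideal P -> maximal_ideal P)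
  (hcoh : @P_coherent R) P : Vset (@kerX R) P -> Xset P.
Proof.
case=> hP hA; split; first exact: hdim.
move=> p hp; apply: NNPP => hnz.
have annP : forall x, x * p = 0 -> P x.
  by move=> x hx; apply: NNPP => hnx; apply: hnz; exists x.
have [u [k [v [hu hv hx]]]] := ann_fg hcoh p.
have [n0 [s0 [hs0 e0]]] := local_nil hdim hP hp.
have [n1 [s1 [hs1 e1]]] := local_nil hdim hP (annP _ hu).
have hvj : forall j, exists ns : nat * R, ~ P ns.2 /\ ns.2 * v j ^+ ns.1 = 0.
  move=> j; have [n [s [h1 h2]]] := local_nil hdim hP (annP _ (hv j)).
  by exists (n, s).
pose w j := projT1 (cid (hvj j)).
have hw : forall j, ~ P (w j).2 /\ (w j).2 * v j ^+ (w j).1 = 0 :=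
  fun j => projT2 (cid (hvj j)).
pose s := s0 * s1 * \prod_j (w j).2.
have hs : ~ P s.
  have [_ _ hpr] := hP.
  move=> /hpr [/hpr [] //|]; apply: prime_notprod => // j; exact: (hw j).1.
apply: hs; apply: hA => Q [hQm hQX].
have hQ := maximal_prime hQm.
have [hQi _ _] := hQm.
case: (classic (Q p)) => hQp.
- case: (hQX p hQp) => t [ht tp0].
  have [d hd] := hx t tp0.
  case: (classic (Q u)) => hQu.
  + case: (classic (exists j, ~ Q (v j))) => [[j hj]|hall].
    * exists (v j ^+ (w j).1); split; first exact: prime_notX.
      rewrite /s (bigD1 j) //=.
      have -> : v j ^+ (w j).1 * (s0 * s1 * ((w j).2 * \prod_(i | i != j) (w i).2)) =
        ((w j).2 * v j ^+ (w j).1) * (s0 * s1 * \prod_(i | i != j) (w i).2) by ring.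
      by rewrite (hw j).2 mul0r.
    * exfalso; apply: ht; rewrite hd; apply: idD => //; first exact: idM.
      apply: id_sum => // j; apply: idM => //.
      by apply: NNPP => h; apply: hall; exists j.
  + exists (u ^+ n1); split; first exact: prime_notX.
    have -> : u ^+ n1 * s = (s1 * u ^+ n1) * (s0 * \prod_j (w j).2) by rewrite /s; ring.
    by rewrite e1 mul0r.
- exists (p ^+ n0); split; first exact: prime_notX.
  have -> : p ^+ n0 * s = (s0 * p ^+ n0) * (s1 * \prod_j (w j).2) by rewrite /s; ring.
  by rewrite e0 mul0r.
Qed.


Lemma kerX_ideal : is_ideal (@kerX R).
Proof.
split.
- move=> P [[_ h1 _] _]; exists 1; split => //; exact: mulr0.
- move=> x y hx hy P hX; have [[t [ht e2]]] := (hy P hX, hx P hX).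
  case=> s [hs e1].
  exists (s * t); split.
    by have [_ _ hpr] := maximal_prime hX.1; move=> /hpr [].
  have -> : s * t * (x + y) = t * (s * x) + s * (t * y) by ring.
  by rewrite e1 e2 !mulr0 addr0.
- move=> r x hx P hX; have [s [hs e]] := hx P hX; exists s; split => //.
  by rewrite mulrCA e mulr0.
Qed.

Lemma X_V P : Xset P -> Vset (@kerX R) P.
Proof.
move=> hX; have hP := maximal_prime hX.1; split => // x hx.
have [s [hs e]] := hx P hX.
have [hPi _ hpr] := hP.
have : P (s * x) by rewrite e; exact: id0.
by case/hpr.
Qed.

Lemma kerX_unit (hdim : forall P : R -> Prop, prime_ideal P -> maximal_ideal P)
  (hcoh : @P_coherent R) (a : R) : kerX a -> exists b, kerX b /\ a * (1 - b) = 0.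
Proof.
move=> ha.
pose J := fun x => exists z y, z * a = 0 /\ kerX y /\ x = z + y.
have hK := kerX_ideal.
case: (classic (J 1)) => [[z [y [hz [hy e]]]]|hJ1].
  exists y; split => //.
  have -> : 1 - y = z by rewrite e; ring.
  by rewrite mulrC hz.
exfalso.
have hJ : is_ideal J.
  split.
  - by exists 0, 0; split; [rewrite mul0r | split; [exact: id0 | rewrite addr0]].
  - move=> x x' [z [y [hz [hy ->]]]] [z' [y' [hz' [hy' ->]]]].
    exists (z + z'), (y + y'); split; first by rewrite mulrDl hz hz' addr0.
    by split; [exact: (idD hK hy hy') | ring].
  - move=> r x [z [y [hz [hy ->]]]].
    exists (r * z), (r * y); split; first by rewrite -mulrA hz mulr0.
    by split; [exact: (idM r hK hy) | ring].
have [||| Q [hQ [JQ _]]] := @prime_avoid J (fun x => x = 1) hJ.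
- by [].
- by move=> x y -> ->; rewrite mulr1.
- by move=> x hx e; apply: hJ1; rewrite -e.
have hXQ : Xset Q.
  apply: V_X => //; split => // y hy; apply: JQ; exists 0, y; split; first exact: mul0r.
  by split => //; rewrite add0r.
have [s [hs e]] := ha Q hXQ.
apply: hs; apply: JQ; exists s, 0; split => //; split; first exact: id0.
by rewrite addr0.
Qed.

End Helpers.
Arguments id0 {R I}.
Arguments idD {R I x y}.
Arguments idM {R I} r {x}.

Local Open Scope ring_scope.

Theorem proposition3p8 (R : comPzRingType)
  (hdim : forall P : R -> Prop, prime_ideal P -> maximal_ideal P)
  (hcoh : @P_coherent R) :
  pure_ideal (@kerX R) /\
  (forall P : R -> Prop, @Xset R P <-> @Vset R (@kerX R) P).
Proof.
split; last first.
  by move=> P; split; [exact: X_V | exact: V_X].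
split; first exact: (kerX_ideal _).
move=> M n m a ha hsum N b [bD1 bD2 bZ].
have hb : forall i, exists c, kerX c /\ a i * (1 - c) = 0.
  by move=> i; apply: kerX_unit.
pose c i := projT1 (cid (hb i)).
have hc : forall i, kerX (c i) /\ a i * (1 - c i) = 0 := fun i => projT2 (cid (hb i)).
have [e [he hpe]] : exists e, kerX e /\ \prod_i (1 - c i) = 1 - e.
  apply: (big_ind (fun z => exists e, kerX e /\ z = 1 - e)).
  - by exists 0; split; [exact: (id0 (kerX_ideal _)) | rewrite subr0].
  - move=> x y [e1 [h1 ->]] [e2 [h2 ->]]; exists (e1 + e2 - e1 * e2); split; last by ring.
    apply: (idD (kerX_ideal _)); first exact: (idD (kerX_ideal _) h1 h2).
    have -> : - (e1 * e2) = (- e1) * e2 by ring.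
    exact: (idM _ (kerX_ideal _) h2).
  - by move=> i _; exists (c i); split; [exact: (hc i).1 | ].
have hae : forall i, a i = a i * e.
  move=> i; apply/eqP; rewrite -subr_eq0; apply/eqP.
  have -> : a i - a i * e = a i * (1 - e) by ring.
  rewrite -hpe (bigD1 i) //= mulrA (hc i).2; exact: mul0r.
have b0 : b 0 e = 0.
  have h := bD1 0 0 e he; rewrite addr0 in h.
  by apply: (addrI (b 0 e)); rewrite addr0 -h.
transitivity (\sum_i b (a i *: m i) e).
  by apply: eq_bigr => i _; rewrite bZ // -hae.
rewrite -(big_morph (fun x => b x e) (fun x y => bD1 x y e he) b0).
by rewrite hsum.
Qed.
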